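(* Let $w,c\ge 0$ and let $(W_1,\ldots,W_n)$ be a $w$-colourable grading of a graph $G$. Let $H$ be a subgraph of $G$ (not necessarily induced) with $\chi(H)>w+2(c+\chi^1(G))$. Then there is an edge $uv$ of $H$ and a subset $X$ of $V(G)$ such that: $G[X]$ is connected; $u,v$ are both earlier than every vertex in $X$; exactly one of $u,v$ has a $G$-neighbour in $X$; and $\chi(X)>c$.
   Context: Graphs are finite and simple. For $X\subseteq V(G)$, $\chi(X)$ means $\chi(G[X])$. A grading of $G$ is a sequence $(W_1,\ldots,W_n)$ of pairwise disjoint subsets of $V(G)$ with union $V(G)$; it is $w$-colourable if $\chi(G[W_i])\le w$ for all $i$. A vertex $u$ is earlier than $v$ if $u\in W_i$, $v\in W_j$ with $i<j$. For $v\in V(G)$ and integer $\rho\ge 0$, $N^{\rho}[v]$ is the set of vertices at distance at most $\rho$ from $v$ in $G$; for $\rho\ge1$, $\chi^{\rho}(G)$ is the maximum of $\chi(N^{\rho}[v])$ over all $v\in V(G)$ (and $0$ for the null graph). *)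

(* Defs.v *)
(* A simple graph on a finite vertex type T is a symmetric
   irreflexive relation e : rel T (symmetry/irreflexivity are hypotheses of
   the main theorem). *)
From mathcomp Require Import all_boot.
Set Implicit Arguments. Unset Strict Implicit. Unset Printing Implicit Defensive.

Section Defs.
Variable T : finType.

(* The side condition x != y is vacuous for irreflexive e; it only
   makes the definition total for arbitrary relations. *)
Definition colourableb (e : rel T) (X : {set T}) (k : nat) : bool :=
  [exists f : {ffun T -> 'I_k},
     [forall x, forall y,
        [&& x \in X, y \in X, x != y & e x y] ==> (f x != f y)]].

Lemma colourable_exists (e : rel T) (X : {set T}) :
  exists k, colourableb e X k.
Proof.
exists #|T|; apply/existsP; exists [ffun x => enum_rank x].
apply/forallP => x; apply/forallP => y; apply/implyP => /and4P [_ _ nxy _].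
rewrite !ffunE; apply: contra nxy => /eqP /enum_rank_inj ->; exact: eqxx.
Qed.

Definition chi (e : rel T) (X : {set T}) : nat :=
  ex_minn (colourable_exists e X).

Definition closed_nbhd (e : rel T) (v : T) : {set T} := v |: [set u | e v u].

(* chi^1(G) = max over v of chi(N^1[v]); 0 for the null graph *)
Definition chi1 (e : rel T) : nat := \max_(v : T) chi e (closed_nbhd e v).

Definition induced_connected (e : rel T) (X : {set T}) : Prop :=
  X != set0 /\
  forall x y, x \in X -> y \in X ->
    connect [rel a b | [&& a \in X, b \in X & e a b]] x y.

Definition grading (n : nat) (W : 'I_n -> {set T}) : Prop :=
  (forall i j : 'I_n, i != j -> [disjoint W i & W j]) /\
  \bigcup_(i < n) W i = [set: T].

Definition w_colourable_grading (e : rel T) (w n : nat) (W : 'I_n -> {set T})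
  : Prop := grading W /\ forall i, chi e (W i) <= w.

Definition earlier (n : nat) (W : 'I_n -> {set T}) (u v : T) : Prop :=
  exists i j : 'I_n, [/\ i < j, u \in W i & v \in W j].

Definition subgraph (e : rel T) (VH : {set T}) (h : rel T) : Prop :=
  (forall x y, h x y -> [/\ x \in VH, y \in VH & e x y]) /\ symmetric h.

Definition has_nbr_in (e : rel T) (u : T) (X : {set T}) : bool :=
  [exists x in X, e u x].

End Defs.

(* Main.v *)
Require Import Defs.
From mathcomp Require Import all_boot.
From Stdlib Require Import Classical.
From mathcomp Require Import zify.
Set Implicit Arguments. Unset Strict Implicit. Unset Printing Implicit Defensive.

Section Chi.
Variable T : finType.
Variable t0 : T.
Implicit Types (r : rel T) (X Y A B : {set T}).

Definition proper_on r X k (f : T -> nat) :=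
  (forall x, x \in X -> f x < k) /\
  (forall x y, x \in X -> y \in X -> x != y -> r x y -> f x != f y).

Lemma chi_spec r X : colourableb r X (chi r X).
Proof. rewrite /chi; by case: ex_minnP. Qed.

Lemma chi_min r X k : colourableb r X k -> chi r X <= k.
Proof. rewrite /chi => H; case: ex_minnP => m _ Hm; exact: Hm. Qed.

Lemma chi_ex r X : exists f : {ffun T -> 'I_(chi r X)},
  [forall x, forall y, [&& x \in X, y \in X, x != y & r x y] ==> (f x != f y)].
Proof. exact/existsP/chi_spec. Qed.

Definition colf r X : T -> nat := fun x => nat_of_ord (xchoose (chi_ex r X) x).

Lemma colf_lt r X x : colf r X x < chi r X.
Proof. exact: ltn_ord. Qed.

Lemma colf_ok r X x y : x \in X -> y \in X -> x != y -> r x y -> colf r X x != colf r X y.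
Proof.
move=> hx hy hxy hr; have /forallP /(_ x) /forallP /(_ y) := xchooseP (chi_ex r X).
by rewrite hx hy hxy hr /=.
Qed.

Lemma chi_le r X k f : 0 < k -> proper_on r X k f -> chi r X <= k.
Proof.
case: k => // k _ [hb hp]; apply: chi_min; apply/existsP.
exists [ffun x => inord (f x)]; apply/forallP => x; apply/forallP => y.
apply/implyP => /and4P [hx hy hxy hr]; rewrite !ffunE.
apply: contra (hp x y hx hy hxy hr) => /eqP/(congr1 val).
by rewrite /= !inordK ?hb // => ->.
Qed.

Lemma chi_pos r X : 0 < chi r X.
Proof.
case E: (chi r X) => //; have := chi_spec r X; rewrite E => /existsP [f _].
by case: (f t0).
Qed.

Lemma chi_sub r A B : A \subset B -> chi r A <= chi r B.
Proof.
move=> /subsetP sAB; apply: chi_min; have /existsP [f /forallP Hf] := chi_spec r B.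
apply/existsP; exists f; apply/forallP => x; apply/forallP => y.
apply/implyP => /and4P [hx hy hxy hr]; move/forallP: (Hf x) => /(_ y) /implyP; apply.
by rewrite !sAB // hxy hr.
Qed.

Lemma chi_U r A B : chi r (A :|: B) <= chi r A + chi r B.
Proof.
apply: (@chi_le _ _ _ (fun x => if x \in A then colf r A x else chi r A + colf r B x)).
  by rewrite addn_gt0 chi_pos.
split.
  move=> x _; case: ifP => _; last by rewrite ltn_add2l colf_lt.
  exact: leq_trans (colf_lt _ _ _) (leq_addr _ _).
move=> x y; rewrite !inE => hx hy hxy hr.
case hxA: (x \in A); case hyA: (y \in A).
- exact: colf_ok.
- apply/eqP => E; have := colf_lt r A x; rewrite E ltnNge; by rewrite leq_addr.
- apply/eqP => E; have := colf_lt r A y; rewrite -E ltnNge; by rewrite leq_addr.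
- rewrite eqn_add2l; apply: colf_ok => //.
  + by move: hx; rewrite hxA.
  + by move: hy; rewrite hyA.
Qed.

End Chi.
Opaque chi.
Section Graph.
Variable T : finType.
Variable t0 : T.
Variable e : rel T.
Hypothesis e_sym : symmetric e.
Implicit Types (X Y A B C N : {set T}).

Definition rA A := [rel a b | [&& a \in A, b \in A & e a b]].
Definition comp A x := [set y in A | connect (rA A) x y].

Lemma rA_sym A : symmetric (rA A).
Proof. move=> a b /=; by rewrite e_sym andbCA andbA. Qed.

Lemma comp_self A x : x \in A -> x \in comp A x.
Proof. by move=> hx; rewrite inE hx connect0. Qed.

Lemma comp_sub A x : comp A x \subset A.
Proof. by apply/subsetP => y; rewrite inE => /andP []. Qed.

Lemma comp_subA A x y : y \in comp A x -> y \in A.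
Proof. by rewrite inE => /andP []. Qed.

Lemma comp_adj A x y z : y \in comp A x -> z \in A -> e y z -> z \in comp A x.
Proof.
rewrite !inE => /andP [hy hc] hz hyz; rewrite hz /=.
apply: connect_trans hc _; apply: connect1; by rewrite /= hy hz hyz.
Qed.

Lemma comp_eq A x y : x \in A -> y \in comp A x -> comp A y = comp A x.
Proof.
move=> hx; rewrite inE => /andP [hy hc]; apply/setP => z; rewrite !inE.
case: (z \in A) => //=; apply/idP/idP => h.
  exact: connect_trans hc h.
by rewrite (sym_connect_sym (@rA_sym A)) in hc; exact: connect_trans hc h.
Qed.

Lemma conn_restrict A C y z : (forall a b, a \in C -> rA A a b -> b \in C) ->
  y \in C -> connect (rA A) y z -> connect (rA C) y z.
Proof.
move=> hC hy /connectP [p hp ->]; elim: p y hy hp => [|a p IH] y hy /=.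
  by rewrite connect0.
case/andP => hya hp; have ha := hC _ _ hy hya.
apply: connect_trans (IH a ha hp); apply: connect1.
move: hya => /= /and3P [_ _ hyae]; by rewrite hy ha hyae.
Qed.

Lemma comp_conn A x : x \in A -> induced_connected e (comp A x).
Proof.
move=> hx; split; first by apply/set0Pn; exists x; exact: comp_self.
have hC : forall a b, a \in comp A x -> rA A a b -> b \in comp A x.
  move=> a b ha /= /and3P [_ hb hab]; exact: comp_adj ha hb hab.
move=> y z hy hz.
have hxy : connect (rA (comp A x)) x y.
  by apply: conn_restrict hC (comp_self hx) _; move: hy; rewrite inE => /andP [].
have hxz : connect (rA (comp A x)) x z.
  by apply: conn_restrict hC (comp_self hx) _; move: hz; rewrite inE => /andP [].
rewrite (sym_connect_sym (@rA_sym _)) in hxy.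
exact: connect_trans hxy hxz.
Qed.

Lemma conn_sub_comp X A x : induced_connected e X -> X \subset A -> x \in X ->
  X \subset comp A x.
Proof.
move=> [_ hc] /subsetP sXA hx; apply/subsetP => y hy; rewrite inE sXA //=.
apply: connect_sub (hc x y hx hy) => a b /= /and3P [ha hb hab].
by apply: connect1; rewrite /= !sXA.
Qed.

Lemma comp_mono A B x : A \subset B -> comp A x \subset comp B x.
Proof.
move=> /subsetP sAB; apply/subsetP => y; rewrite !inE => /andP [hy hc].
rewrite sAB //=; apply: connect_sub hc => a b /= /and3P [ha hb hab].
by apply: connect1; rewrite /= !sAB.
Qed.

Lemma chi_comps A k : A != set0 -> (forall b, b \in A -> chi e (comp A b) <= k) ->
  chi e A <= k.
Proof.
case/set0Pn => b0 hb0 hk.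
apply: (@chi_le _ _ _ _ (fun x => colf e (comp A x) x)).
  exact: leq_trans (chi_pos b0 _ _) (hk _ hb0).
split.
  by move=> x hx; exact: leq_trans (colf_lt _ _ _) (hk _ hx).
move=> x y hx hy hxy hr.
have hyc : y \in comp A x by apply: comp_adj (comp_self hx) hy hr.
rewrite (comp_eq hx hyc); apply: colf_ok => //; exact: comp_self.
Qed.

Lemma exit_lemma A N b y0 : b \in A :\: N -> y0 \in N ->
  connect (rA A) b y0 ->
  exists p q, [/\ p \in comp (A :\: N) b, q \in A, q \in N & e p q].
Proof.
move=> hb hy0 /connectP [s hs Ey0]; subst y0.
suff H : forall s p, path (rA A) p s -> last p s \in N -> p \in comp (A :\: N) b ->
   exists p' q, [/\ p' \in comp (A :\: N) b, q \in A, q \in N & e p' q].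
  by apply: H hs hy0 (comp_self hb).
elim=> [|a s' IH] p /=.
  move=> _ hpN hp; have := comp_subA hp; by rewrite inE hpN.
case/andP => /and3P [hpA haA hpa] hs' hl hp.
case haN: (a \in N); first by exists p, a.
apply: IH hs' hl _; apply: comp_adj hp _ hpa; by rewrite inE haN haA.
Qed.

End Graph.
Section Main.
Variable T : finType.
Variable e : rel T.
Hypothesis e_sym : symmetric e.
Hypothesis e_irr : irreflexive e.
Variables (w c n : nat) (W : 'I_n -> {set T}).
Hypothesis hW : w_colourable_grading e w W.
Variables (VH : {set T}) (h : rel T).
Hypothesis hH : subgraph e VH h.
Hypothesis NV : forall u v (X : {set T}), h u v -> induced_connected e X ->
  (forall x, x \in X -> earlier W u x /\ earlier W v x) -> c < chi e X ->
  has_nbr_in e u X = has_nbr_in e v X.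
Variable t0 : T.

Definition levo x : option 'I_n := [pick i | x \in W i].
Definition lev x : nat := if levo x is Some i then val i else 0.

Lemma levo_W i x : x \in W i -> levo x = Some i.
Proof.
move=> hx; rewrite /levo; case: pickP => [j hj | hn]; last by rewrite hn in hx.
case: (eqVneq j i) => [-> // | hji].
by rewrite (disjointFr (hW.1.1 _ _ hji) hj) in hx.
Qed.

Lemma lev_W i x : x \in W i -> lev x = i.
Proof. by move=> hx; rewrite /lev (levo_W hx). Qed.

Lemma lev_ex x : exists i : 'I_n, x \in W i.
Proof.
have : x \in [set: T] by rewrite inE.
by rewrite -hW.1.2 => /bigcupP [i _ hi]; exists i.
Qed.

Lemma lev_lt x : lev x < n.
Proof. by case: (lev_ex x) => i hi; rewrite (lev_W hi). Qed.

Lemma earlierE u x : earlier W u x <-> lev u < lev x.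
Proof.
split; first by case=> i [j [hij hu hx]]; rewrite (lev_W hu) (lev_W hx).
case: (lev_ex u) => i hi; case: (lev_ex x) => j hj.
rewrite (lev_W hi) (lev_W hj) => hij; by exists i, j.
Qed.

Definition L k := [set x | k < lev x].
Definition N u := [set y | e u y].

Lemma later_earlier (X : {set T}) k u : X \subset L k -> lev u <= k ->
  forall x, x \in X -> earlier W u x.
Proof.
move=> /subsetP sX hu x hx; apply/earlierE; have := sX x hx; rewrite inE.
exact: leq_ltn_trans hu.
Qed.

Lemma nbr_false u (X : {set T}) : (forall x, x \in X -> ~~ e u x) -> has_nbr_in e u X = false.
Proof. move=> H; apply/existsP => [[x /andP [hx hux]]]; by rewrite (negbTE (H x hx)) in hux. Qed.

Lemma nbr_falseE u (X : {set T}) x : has_nbr_in e u X = false -> x \in X -> ~~ e u x.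
Proof. move=> H hx; apply/negP => hux; move/negP: (negbT H); apply; apply/existsP; exists x; by rewrite hx hux. Qed.

Definition anch_def u k := [set x | [&& x \in L k, e u x &
  [exists b, [&& b \in L k :\: N u, e x b & c < chi e (comp e (L k :\: N u) b)]]]].
Fact anch_key : unit. Proof. by []. Qed.
Definition anch := locked_with anch_key anch_def.

Lemma anchE u k x : (x \in anch u k) = [&& x \in L k, e u x &
  [exists b, [&& b \in L k :\: N u, e x b & c < chi e (comp e (L k :\: N u) b)]]].
Proof. by rewrite [anch]unlock /anch_def in_set. Qed.

Lemma anch_aux u v k b x B B' : h u v -> lev u <= k -> lev v <= k ->
  b \in L k :\: N u -> B = comp e (L k :\: N u) b -> c < chi e B ->
  B' = comp e (L k :\: N v) b ->
  x \in L k -> e u x -> e x b ->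
  [/\ b \in L k :\: N v, e v x & c < chi e B'].
Proof.
move=> huv hu hv hb EB hbig EB' hxL hux hxb.
have hbB : b \in B by rewrite EB; exact: comp_self.
have hBc : induced_connected e B by rewrite EB; exact: comp_conn.
have hBL : B \subset L k.
  apply/subsetP => y; rewrite EB => /comp_subA; by rewrite inE => /andP [].
have hearly : forall y, y \in B -> earlier W u y /\ earlier W v y.
  by move=> y hy; split; apply: later_earlier hBL _ y hy.
have hnu : has_nbr_in e u B = false.
  apply: nbr_false => y; rewrite EB => /comp_subA; by rewrite !inE => /andP [].
have hnv : has_nbr_in e v B = false by rewrite -(NV huv hBc hearly hbig).
have hBv : B \subset L k :\: N v.
  apply/subsetP => y hy; rewrite !inE (nbr_falseE hnv hy) /=.
  by move: (subsetP hBL y hy); rewrite inE.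
have hBB' : B \subset B' by rewrite EB'; exact: conn_sub_comp.
have hbig' : c < chi e B' by exact: leq_trans hbig (chi_sub _ hBB').
have hb' : b \in L k :\: N v by exact: subsetP hBv b hbB.
have hB'c : induced_connected e B' by rewrite EB'; exact: comp_conn.
have hB'L : B' \subset L k.
  apply/subsetP => y; rewrite EB' => /comp_subA; by rewrite inE => /andP [].
have hearly' : forall y, y \in B' -> earlier W v y /\ earlier W u y.
  by move=> y hy; split; apply: later_earlier hB'L _ y hy.
have hnv' : has_nbr_in e v B' = false.
  apply: nbr_false => y; rewrite EB' => /comp_subA; by rewrite !inE => /andP [].
have hvu : h v u by rewrite hH.2.
have hnu' : has_nbr_in e u B' = false by rewrite -(NV hvu hB'c hearly' hbig').
have hB'u : B' \subset L k :\: N u.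
  apply/subsetP => y hy; rewrite !inE (nbr_falseE hnu' hy) /=.
  by move: (subsetP hB'L y hy); rewrite inE.
have hB'B : B' \subset B.
  rewrite EB; apply: conn_sub_comp hB'c hB'u _; rewrite EB'; exact: comp_self.
split => //; apply/negPn/negP => hnvx.
have hx' : x \in L k :\: N v by rewrite in_setD hxL andbT /N inE.
have hxB' : x \in B'.
  rewrite EB'; apply: (@comp_adj _ e _ b b x (comp_self e hb') hx'); by rewrite e_sym.
have := subsetP hB'u x hxB'; by rewrite in_setD /N inE hux.
Qed.

Lemma anch_sub u v k x : h u v -> lev u <= k -> lev v <= k -> x \in anch u k -> x \in anch v k.
Proof.
move=> huv hu hv; rewrite anchE => /and3P [hxL hux /existsP [b /and3P [hb hxb hbig]]].
have [hb' hvx hbig'] := anch_aux huv hu hv hb erefl hbig erefl hxL hux hxb.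
rewrite anchE hxL hvx /=; apply/existsP; exists b; by rewrite hb' hxb hbig'.
Qed.

Lemma anch_eq u v k : h u v -> lev u <= k -> lev v <= k -> anch u k = anch v k.
Proof.
move=> huv hu hv; apply/setP => x; apply/idP/idP; first exact: anch_sub.
by apply: anch_sub => //; rewrite hH.2.
Qed.

Definition Pk v := [pred k : 'I_n | (lev v <= k) && (anch v k != set0)].
Definition Anc := [set v | [exists k : 'I_n, Pk v k]].
Lemma AncE v : (v \in Anc) = [exists k : 'I_n, Pk v k].
Proof. by rewrite /Anc in_set. Qed.

Definition kb v := \max_(k | Pk v k) (val k).
Definition anchor v := odflt v [pick x in anch v (kb v)].

Lemma kb_ord v : v \in Anc -> exists2 k : 'I_n, Pk v k & kb v = k.
Proof.
rewrite AncE => /existsP [k0 hk0].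
have hc : 0 < #|Pk v| by apply/card_gt0P; exists k0.
case: (eq_bigmax_cond val hc) => k hk E; exists k => //.
Qed.

Lemma anchor_in v : v \in Anc -> anchor v \in anch v (kb v).
Proof.
move=> /kb_ord [k /andP [_ hne] E]; rewrite /anchor.
case: pickP => [x hx // | hn]; case/set0Pn: hne => y hy.
by move: (hn y); rewrite /= E hy.
Qed.

Lemma anchor_eq u v : h u v -> lev u <= lev v -> v \in Anc ->
  u \in Anc /\ anchor u = anchor v.
Proof.
move=> huv huv' hvA.
have hP : forall k : 'I_n, lev v <= k -> Pk u k = Pk v k.
  move=> k hk; rewrite /= (anch_eq huv (leq_trans huv' hk) hk) hk.
  by rewrite (leq_trans huv' hk).
case: (kb_ord hvA) => kv hkv Ekv.
have hkv' : Pk u kv by rewrite hP //; case/andP: hkv.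
have huA : u \in Anc by rewrite AncE; apply/existsP; exists kv.
split => //.
case: (kb_ord huA) => ku hku Eku.
have h1 : kb v <= kb u by rewrite Ekv; exact: leq_bigmax_cond.
have hku' : Pk v ku.
  rewrite -hP //; rewrite -Eku; apply: leq_trans h1; rewrite Ekv; by case/andP: hkv.
have h2 : kb u <= kb v by rewrite Eku; exact: leq_bigmax_cond.
have Ek : kb u = kb v by apply/eqP; rewrite eqn_leq h1 h2.
have hlv : lev v <= kb v by rewrite Ekv; case/andP: hkv.
have hlu : lev u <= kb v := leq_trans huv' hlv.
rewrite /anchor Ek (anch_eq huv hlu hlv); case: pickP => // hn.
case/andP: hkv => _ /set0Pn [y hy]; by move: (hn y); rewrite /= Ekv hy.
Qed.

Definition inC x i := (x \in L i) &&
  [exists u, [&& u \notin Anc, lev u == i & has_nbr_in e u (comp e (L i) x)]].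
Definition VC := [set x | has (inC x) (iota 0 n)].
Lemma VCE x : (x \in VC) = has (inC x) (iota 0 n).
Proof. by rewrite /VC in_set. Qed.

Definition iC x := find (inC x) (iota 0 n).
Definition Cset x := comp e (L (iC x)) x.

Lemma iC_spec x : x \in VC -> inC x (iC x).
Proof.
rewrite VCE => hh.
have hlt : iC x < n by move: hh; rewrite has_find size_iota.
by have := nth_find 0 hh; rewrite nth_iota // add0n.
Qed.

Lemma iC_min x j : j < iC x -> inC x j = false.
Proof.
move=> hj; have := before_find 0 hj; rewrite nth_iota ?add0n //.
apply: leq_trans hj _; rewrite -[n](size_iota 0); exact: find_size.
Qed.

Lemma Cset_eq x y : x \in VC -> y \in VC -> e x y -> Cset x = Cset y.
Proof.
wlog: x y / iC x <= iC y.
  move=> H hx hy hxy; case: (leqP (iC x) (iC y)) => hle; first exact: H.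
  symmetry; apply: H => //; [exact: ltnW | by rewrite e_sym].
move=> hle hx hy hxy.
have /andP [hxL /existsP [u /and3P [hu hlu hnb]]] := iC_spec hx.
have /andP [hyL _] := iC_spec hy.
have hyL' : y \in L (iC x) by move: hyL; rewrite !inE; exact: leq_ltn_trans hle.
have hyc : y \in comp e (L (iC x)) x := comp_adj (comp_self e hxL) hyL' hxy.
have Ec : comp e (L (iC x)) y = comp e (L (iC x)) x := comp_eq e_sym hxL hyc.
have hin : inC y (iC x).
  by rewrite /inC hyL' Ec; apply/existsP; exists u; rewrite hu hlu hnb.
have Ei : iC y = iC x.
  apply/eqP; rewrite eqn_leq hle andbT leqNgt; apply/negP => hlt.
  by rewrite (iC_min hlt) in hin.
by rewrite /Cset Ei Ec.
Qed.

Lemma chi_clos u : chi e (closed_nbhd e u) <= chi1 e.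
Proof. rewrite /chi1; exact: (@leq_bigmax _ (fun v => chi e (closed_nbhd e v)) u). Qed.

Lemma chi_inC_aux x i C u y0 : x \in L i -> C = comp e (L i) x -> u \notin Anc ->
  lev u = i -> y0 \in C -> e u y0 -> chi e C <= c + chi1 e.
Proof.
move=> hxL EC hu hlu hy0 huy0.
have hcl := chi_clos u.
have hCN : C :&: N u \subset closed_nbhd e u.
  apply/subsetP => z; rewrite !inE => /andP [_ hz]; by rewrite hz orbT.
case: (boolP (C :\: N u == set0)) => hD.
  have hsub : C \subset closed_nbhd e u.
    apply/subsetP => z hz; have : z \notin C :\: N u by rewrite (eqP hD) inE.
    rewrite !inE hz andbT negbK => hz'; by rewrite hz' orbT.
  apply: leq_trans (chi_sub _ hsub) _; exact: leq_trans hcl (leq_addl _ _).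
have hCL : C \subset L i by rewrite EC; exact: comp_sub.
have hD' : chi e (C :\: N u) <= c.
  apply: chi_comps => // b hb.
  rewrite leqNgt; apply/negP => hbig.
  have hbC : b \in C by move: hb; rewrite inE => /andP [].
  have hbL : b \in L i :\: N u.
    move: hb; rewrite !inE => /andP [-> _] /=; by move: (subsetP hCL b hbC); rewrite inE.
  have hconn : connect (rA e (L i)) b y0.
    move: hbC hy0; rewrite EC !inE => /andP [_ hxb] /andP [_ hxy0].
    rewrite (sym_connect_sym (rA_sym e_sym _)) in hxb.
    exact: connect_trans hxb hxy0.
  have hy0N : y0 \in N u by rewrite inE.
  case: (exit_lemma hbL hy0N hconn) => p [q [hp hqL hqN hpq]].
  have hpL : p \in L i :\: N u by exact: comp_subA hp.
  have Ep : comp e (L i :\: N u) p = comp e (L i :\: N u) b := comp_eq e_sym hbL hp.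
  have hsubm : comp e (C :\: N u) b \subset comp e (L i :\: N u) p.
    rewrite Ep; apply: comp_mono; apply/subsetP => z; rewrite !inE => /andP [-> hz] /=.
    by move: (subsetP hCL z hz); rewrite inE.
  have hq : q \in anch u i.
    rewrite anchE hqL /=; move: hqN; rewrite inE => -> /=.
    apply/existsP; exists p; rewrite hpL e_sym hpq /=.
    exact: leq_trans hbig (chi_sub _ hsubm).
  move/negP: hu; apply; rewrite AncE; apply/existsP; exists (Ordinal (lev_lt u)).
  rewrite /= hlu leqnn /=; apply/set0Pn; by exists q.
have hU : C \subset (C :&: N u) :|: (C :\: N u) by rewrite setID.
apply: leq_trans (chi_sub _ hU) _; apply: leq_trans (chi_U t0 _ _ _) _.
rewrite addnC leq_add //; exact: leq_trans (chi_sub _ hCN) hcl.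
Qed.

Lemma chi_Cset x : x \in VC -> chi e (Cset x) <= c + chi1 e.
Proof.
move=> /iC_spec /andP [hxL /existsP [u /and3P [hu /eqP hlu /existsP [y0 /andP [hy0 huy0]]]]].
exact: chi_inC_aux hxL erefl hu hlu hy0 huy0.
Qed.

Lemma same_level u v : u \notin VC -> v \notin VC -> u \notin Anc -> v \notin Anc ->
  e u v -> lev u = lev v.
Proof.
wlog: u v / lev u <= lev v.
  move=> H hu hv hua hva huv; case: (leqP (lev u) (lev v)) => hle; first exact: H.
  symmetry; apply: H => //; [exact: ltnW | by rewrite e_sym].
move=> hle hu hv hua hva huv; apply/eqP; rewrite eqn_leq hle /= leqNgt; apply/negP => hlt.
move/negP: hv; apply; rewrite VCE; apply/hasP; exists (lev u).
  by rewrite mem_iota add0n lev_lt.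
rewrite /inC [v \in L _]inE hlt /=; apply/existsP; exists u; rewrite hua eqxx /=.
apply/existsP; exists v; rewrite huv andbT; apply: comp_self; by rewrite inE.
Qed.

Definition colW x := if levo x is Some i then colf e (W i) x else 0.

Lemma colW_lt x : colW x < w.
Proof.
case: (lev_ex x) => i hi; rewrite /colW (levo_W hi).
exact: leq_trans (colf_lt _ _ _) (hW.2 i).
Qed.

Lemma colW_ok u v : lev u = lev v -> u != v -> e u v -> colW u != colW v.
Proof.
case: (lev_ex u) => i hi; case: (lev_ex v) => j hj.
rewrite (lev_W hi) (lev_W hj) /colW (levo_W hi) (levo_W hj) => /val_inj Eij; subst j.
move=> huv he; exact: colf_ok.
Qed.

Lemma anchors_same x y : h x y -> x \in Anc -> y \in Anc -> anchor x = anchor y.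
Proof.
move=> hxy hx hy; case: (leqP (lev x) (lev y)) => hle.
  by case: (anchor_eq hxy hle hy).
have hyx : h y x by rewrite hH.2.
by case: (anchor_eq hyx (ltnW hle) hx) => _ ->.
Qed.

Lemma in_clos x : x \in Anc -> x \in closed_nbhd e (anchor x).
Proof.
move=> /anchor_in; rewrite anchE => /and3P [_ hx _]; by rewrite !inE e_sym hx orbT.
Qed.

Definition F x := if x \in VC then colf e (Cset x) x
  else if x \in Anc then c + chi1 e + colf e (closed_nbhd e (anchor x)) x
  else c + chi1 e + chi1 e + colW x.

Lemma F_low x : x \in VC -> F x < c + chi1 e.
Proof. move=> hx; rewrite /F hx; exact: leq_trans (colf_lt _ _ _) (chi_Cset hx). Qed.

Lemma F_mid x : x \notin VC -> x \in Anc ->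
  c + chi1 e <= F x < c + chi1 e + chi1 e.
Proof.
move=> hx hA; rewrite /F (negbTE hx) hA leq_addr /= ltn_add2l.
exact: leq_trans (colf_lt _ _ _) (chi_clos _).
Qed.

Lemma F_high x : x \notin VC -> x \notin Anc ->
  c + chi1 e + chi1 e <= F x < c + chi1 e + chi1 e + w.
Proof. move=> hx hA; by rewrite /F (negbTE hx) (negbTE hA) leq_addr /= ltn_add2l colW_lt. Qed.

Lemma main_bound : chi h VH <= c + chi1 e + chi1 e + w.
Proof.
apply: (@chi_le _ _ _ _ F).
  apply: leq_trans (chi_pos t0 e (closed_nbhd e t0)) _.
  apply: leq_trans (chi_clos t0) _; lia.
split.
  move=> x _; case: (boolP (x \in VC)) => hxC.
    apply: leq_trans (F_low hxC) _; lia.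
  case: (boolP (x \in Anc)) => hxA.
    case/andP: (F_mid hxC hxA) => _ h1; apply: leq_trans h1 _; exact: leq_addr.
  by case/andP: (F_high hxC hxA).
move=> x y hx hy hxy hh; have [_ _ he] := hH.1 _ _ hh.
case: (boolP (x \in VC)) => hxC; case: (boolP (y \in VC)) => hyC.
- have hxx : x \in Cset x by have /andP [hxL _] := iC_spec hxC; exact: comp_self.
  have hyy : y \in Cset y by have /andP [hyL _] := iC_spec hyC; exact: comp_self.
  rewrite /F hxC hyC (Cset_eq hxC hyC he); rewrite (Cset_eq hxC hyC he) in hxx.
  exact: colf_ok.
- apply/eqP => E; have := F_low hxC; rewrite E ltnNge.
  case: (boolP (y \in Anc)) => hyA.
    by case/andP: (F_mid hyC hyA) => ->.
  case/andP: (F_high hyC hyA) => h1 _; by rewrite (leq_trans _ h1) // leq_addr.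
- apply/eqP => E; have := F_low hyC; rewrite -E ltnNge.
  case: (boolP (x \in Anc)) => hxA.
    by case/andP: (F_mid hxC hxA) => ->.
  case/andP: (F_high hxC hxA) => h1 _; by rewrite (leq_trans _ h1) // leq_addr.
- case: (boolP (x \in Anc)) => hxA; case: (boolP (y \in Anc)) => hyA.
  + rewrite /F (negbTE hxC) (negbTE hyC) hxA hyA eqn_add2l.
    have hyy := in_clos hyA; have hxx := in_clos hxA.
    rewrite (anchors_same hh hxA hyA) in hxx *.
    exact: colf_ok.
  + apply/eqP => E; case/andP: (F_mid hxC hxA) => _; rewrite E ltnNge.
    by case/andP: (F_high hyC hyA) => ->.
  + apply/eqP => E; case/andP: (F_mid hyC hyA) => _; rewrite -E ltnNge.
    by case/andP: (F_high hxC hxA) => ->.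
  + rewrite /F (negbTE hxC) (negbTE hyC) (negbTE hxA) (negbTE hyA) eqn_add2l.
    apply: colW_ok => //; exact: same_level.
Qed.

End Main.

Unset Implicit Arguments.

Theorem mainTheorem3 (T : finType) (e : rel T)
  (e_sym : symmetric e) (e_irr : irreflexive e)
  (w c n : nat) (W : 'I_n -> {set T})
  (hW : w_colourable_grading e w W)
  (VH : {set T}) (h : rel T) (hH : subgraph e VH h)
  (hchi : chi h VH > w + 2 * (c + chi1 e)) :
  exists u v : T, exists X : {set T},
    [/\ h u v,
        induced_connected e X,
        (forall x, x \in X -> earlier W u x /\ earlier W v x),
        has_nbr_in e u X (+) has_nbr_in e v X
      & chi e X > c].
Proof.
case: (classic (exists u v : T, exists X : {set T},
    [/\ h u v, induced_connected e X,
        (forall x, x \in X -> earlier W u x /\ earlier W v x),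
        has_nbr_in e u X (+) has_nbr_in e v X & chi e X > c])) => [// | Hno].
exfalso.
have NV : forall u v (X : {set T}), h u v -> induced_connected e X ->
  (forall x, x \in X -> earlier W u x /\ earlier W v x) -> c < chi e X ->
  has_nbr_in e u X = has_nbr_in e v X.
  move=> u v X huv hX hE hc.
  case E1: (has_nbr_in e u X); case E2: (has_nbr_in e v X) => //; exfalso;
    apply: Hno; exists u, v, X; split => //; by rewrite E1 E2.
case: (pickP (fun _ : T => true)) => [t0 _ | hT].
  have := main_bound e_sym hW hH NV t0; move: hchi; lia.
have : chi h VH <= 0.
  apply: chi_min; apply/existsP.
  have f : T -> 'I_0 by move=> x; move: (hT x).
  exists (finfun f); apply/forallP => x; by move: (hT x).
move: hchi; lia.
Qed.
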